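(* As formal power series in $x$, $\widehat B(x)=\sum_{n\ge0}\beta_nx^n$ has the continued fraction expansion $$\widehat B(x)=\cfrac{1}{[1]_q+\cfrac{x}{\frac{q+1}{[1]_q}-\cfrac{x}{[3]_q+\cfrac{q[2]_qx}{\frac{q^2+1}{[2]_q}-\cfrac{[2]_qx}{[5]_q+\cfrac{q^2[3]_qx}{\frac{q^3+1}{[3]_q}-\cfrac{[3]_qx}{\ddots}}}}}}}$$ where the pattern is: for each $n\ge1$ the denominator $[2n-1]_q$ is followed by $+\,q^{n-1}[n]_q x$ over $\frac{q^n+1}{[n]_q}$, which is followed by $-\,[n]_qx$ over $[2n+1]_q$, and so on.
   Context: $q$ is an indeterminate. The $q$-Bernoulli–Carlitz numbers $\beta_n\in\mathbb{Q}(q)$ are defined by: for all $n\ge0$, $q\sum_{k=0}^{n}\binom{n}{k}q^k\beta_k-\beta_n$ equals $q-1$ if $n=0$, $1$ if $n=1$, and $0$ if $n>1$. $[m]_q=(q^m-1)/(q-1)$. *)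

(* Defs.v *)
From HB Require Import structures.
From mathcomp Require Import all_boot all_order all_algebra fraction.
Set Implicit Arguments. Unset Strict Implicit. Unset Printing Implicit Defensive.
Import Order.TTheory GRing.Theory Num.Theory.
Local Open Scope ring_scope.

Definition Kq : fieldType := {fraction {poly rat}}.
Definition qq : Kq := @FracField.tofrac {poly rat} (polyX rat).

Definition qint (m : nat) : Kq := (qq ^+ m - 1) / (qq - 1).

Definition fps := nat -> Kq.
Definition fps_const (c : Kq) : fps := fun n => if n == 0%N then c else 0.
Definition fps_add (f g : fps) : fps := fun n => f n + g n.
Definition fps_scale (c : Kq) (f : fps) : fps := fun n => c * f n.
Definition fps_mulX (f : fps) : fps := fun n => if n is k.+1 then f k else 0.

Fixpoint fps_inv_seq (f : fps) (n : nat) : seq Kq :=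
  match n with
  | 0 => [:: (f 0%N)^-1]
  | n'.+1 => let s := fps_inv_seq f n' in
      rcons s (- (f 0%N)^-1 * \sum_(i < n'.+1) f i.+1 * nth 0 s (n' - i))
  end.
Definition fps_inv (f : fps) : fps := fun n => nth 0 (fps_inv_seq f n) n.

(* Tail of the continued fraction
   a_j + c_{j+1} x / (a_{j+1} + c_{j+2} x / ( ... / a_{j+d})) *)
Fixpoint cf_tail (a c : nat -> Kq) (j d : nat) : fps :=
  match d with
  | 0 => fps_const (a j)
  | d'.+1 => fps_add (fps_const (a j))
               (fps_scale (c j.+1) (fps_mulX (fps_inv (cf_tail a c j.+1 d'))))
  end.

Definition cf_convergent (a c : nat -> Kq) (m : nat) : fps :=
  fps_inv (cf_tail a c 0 m).

(* Partial denominators: a_{2k} = [2k+1]_q, a_{2k+1} = (q^{k+1}+1)/[k+1]_q *)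
Definition cfB_a (j : nat) : Kq :=
  if odd j then (qq ^+ (j./2).+1 + 1) / qint (j./2).+1 else qint j.+1.
(* Partial numerator coefficients (of x): c_{2k+1} = q^k [k+1]_q,
   c_{2k+2} = - [k+1]_q *)
Definition cfB_c (j : nat) : Kq :=
  if odd j then qq ^+ (j./2) * qint (j./2).+1 else - qint (j./2).

Definition is_qBernoulliCarlitz (beta : nat -> Kq) : Prop :=
  forall n : nat,
    qq * (\sum_(k < n.+1) ('C(n, k))%:R * qq ^+ k * beta k) - beta n
    = if n == 0%N then qq - 1 else if n == 1%N then 1 else 0.

(* Main.v *)
Require Import Defs.
From HB Require Import structures.
From mathcomp Require Import all_boot all_order all_algebra fraction.
From mathcomp Require Import ring.
Ltac mcring := ring.
Ltac mcfield := field.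
From Stdlib Require Import Ring FunctionalExtensionality.
Import Order.TTheory GRing.Theory Num.Theory.
Local Open Scope ring_scope.

Section PS.
Variable F : fieldType.
Definition ps := nat -> F.
Definition pc (c : F) : ps := fun n => if n == 0%N then c else 0.
Definition padd (f g : ps) : ps := fun n => f n + g n.
Definition popp (f : ps) : ps := fun n => - f n.
Definition psub (f g : ps) : ps := fun n => f n - g n.
Definition pmul (f g : ps) : ps := fun n => \sum_(i < n.+1) f i * g (n - i)%N.
Definition pX : ps := fun n => if n == 1%N then 1 else 0.
Definition p0 : ps := pc 0.
Definition p1 : ps := pc 1.
Definition phi (p : {poly F}) : ps := fun n => p`_n.
Definition tr (f : ps) (n : nat) : {poly F} := \poly_(i < n.+1) f i.
Definition agree (n : nat) (f g : ps) := forall m, (m <= n)%N -> f m = g m.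

Lemma agree_eq f g : (forall n, agree n f g) -> f = g.
Proof. move=> H; apply: functional_extensionality => n; exact: H. Qed.

Lemma agree_tr n f : agree n f (phi (tr f n)).
Proof. by move=> m hm; rewrite /phi /tr coef_poly ltnS hm. Qed.

Lemma agree_sym n f g : agree n f g -> agree n g f.
Proof. by move=> H m hm; rewrite H. Qed.

Lemma agree_trans n f g h : agree n f g -> agree n g h -> agree n f h.
Proof. by move=> H1 H2 m hm; rewrite H1 // H2. Qed.

Lemma agree_le n m f g : (m <= n)%N -> agree n f g -> agree m f g.
Proof. by move=> hmn H k hk; apply: H; apply: leq_trans hmn. Qed.

Lemma phiM p r : phi (p * r) = pmul (phi p) (phi r).
Proof. by apply: functional_extensionality => n; rewrite /phi coefM. Qed.

Lemma phiD p r : phi (p + r) = padd (phi p) (phi r).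
Proof. by apply: functional_extensionality => n; rewrite /phi coefD. Qed.

Lemma phiN p : phi (- p) = popp (phi p).
Proof. by apply: functional_extensionality => n; rewrite /phi coefN. Qed.

Lemma phiB p r : phi (p - r) = psub (phi p) (phi r).
Proof. by apply: functional_extensionality => n; rewrite /phi coefB. Qed.

Lemma phiC c : phi c%:P = pc c.
Proof. by apply: functional_extensionality => n; rewrite /phi coefC. Qed.

Lemma phi1 : phi 1 = p1.
Proof. by rewrite /p1 -phiC polyC1. Qed.

Lemma phiX : phi 'X = pX.
Proof. by apply: functional_extensionality => n; rewrite /phi coefX /pX; case: (n == 1%N). Qed.

Lemma pmul_agree n f f' g g' : agree n f f' -> agree n g g' -> agree n (pmul f g) (pmul f' g').
Proof.
move=> Hf Hg m hm; rewrite /pmul; apply: eq_bigr => i _.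
have hi : (i <= n)%N by apply: leq_trans hm; rewrite -ltnS.
rewrite Hf // Hg //; apply: leq_trans hm; exact: leq_subr.
Qed.

Lemma padd_agree n f f' g g' : agree n f f' -> agree n g g' -> agree n (padd f g) (padd f' g').
Proof. by move=> Hf Hg m hm; rewrite /padd Hf // Hg. Qed.

Lemma pmul_poly n f g : agree n (pmul f g) (phi (tr f n * tr g n)).
Proof. rewrite phiM; apply: pmul_agree; exact: agree_tr. Qed.

Lemma pmulC f g : pmul f g = pmul g f.
Proof.
apply: agree_eq => n; eapply agree_trans; first exact: pmul_poly.
by rewrite mulrC; apply: agree_sym; apply: pmul_poly.
Qed.

Lemma pmulA f g h : pmul f (pmul g h) = pmul (pmul f g) h.
Proof.
apply: agree_eq => n.
have E1 : agree n (pmul f (pmul g h)) (phi (tr f n * (tr g n * tr h n))).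
  rewrite phiM; apply: pmul_agree; first exact: agree_tr.
  exact: pmul_poly.
have E2 : agree n (pmul (pmul f g) h) (phi ((tr f n * tr g n) * tr h n)).
  rewrite phiM; apply: pmul_agree; last exact: agree_tr.
  exact: pmul_poly.
rewrite mulrA in E1; eapply agree_trans; first exact: E1.
exact: agree_sym E2.
Qed.

Lemma pmul1 f : pmul p1 f = f.
Proof.
apply: agree_eq => n; eapply agree_trans; first exact: (pmul_poly n p1 f).
have -> : tr p1 n = 1.
  by apply/polyP => i; rewrite coef_poly coef1 /p1 /pc; case: i => [|i] //=; case: ifP.
by rewrite mul1r; apply: agree_sym; apply: agree_tr.
Qed.

Lemma pmulDl f g h : pmul (padd f g) h = padd (pmul f h) (pmul g h).
Proof.
apply: functional_extensionality => n; rewrite /pmul /padd -big_split /=.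
by apply: eq_bigr => i _; rewrite mulrDl.
Qed.

Lemma ps_ring : ring_theory p0 p1 padd pmul psub popp (@eq ps).
Proof.
constructor.
- by move=> x; apply: functional_extensionality => n; rewrite /padd /p0 /pc; case: (n == 0%N); rewrite add0r.
- by move=> x y; apply: functional_extensionality => n; rewrite /padd addrC.
- by move=> x y z; apply: functional_extensionality => n; rewrite /padd addrA.
- exact: pmul1.
- exact: pmulC.
- exact: pmulA.
- exact: pmulDl.
- by [].
- by move=> x; apply: functional_extensionality => n; rewrite /padd /popp /p0 /pc subrr; case: (n == 0%N).
Qed.

Add Ring psRing : ps_ring.

Lemma test (a b : ps) : pmul (padd a b) (padd a b) = padd (pmul a a) (padd (pmul (pc 1) (pmul a b)) (padd (pmul a b) (pmul b b))).
Proof. rewrite -/p1. ring. Qed.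

Lemma pmulC_coef c f n : pmul (pc c) f n = c * f n.
Proof.
rewrite /pmul big_ord_recl /= subn0 big1 ?addr0 // => i _.
by rewrite /pc /= mul0r.
Qed.

Lemma pmulX_coef f n : pmul pX f n = if n is m.+1 then f m else 0.
Proof.
rewrite /pmul big_ord_recl /= /pX /= mul0r add0r.
case: n => [|m]; first by rewrite big_ord0.
rewrite big_ord_recl /= subSS subn0 mul1r big1 ?addr0 // => i _.
by rewrite /= mul0r.
Qed.

Lemma pcD a b : pc (a + b) = padd (pc a) (pc b).
Proof. by apply: functional_extensionality => n; rewrite /padd /pc; case: (n == 0%N); rewrite ?addr0. Qed.
Lemma pcM a b : pc (a * b) = pmul (pc a) (pc b).
Proof. by apply: functional_extensionality => n; rewrite pmulC_coef /pc; case: (n == 0%N); rewrite ?mulr0. Qed.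
Lemma pcN a : pc (- a) = popp (pc a).
Proof. by apply: functional_extensionality => n; rewrite /popp /pc; case: (n == 0%N); rewrite ?oppr0. Qed.

Lemma pX_cancel f : pmul pX f = p0 -> f = p0.
Proof.
move=> H; apply: functional_extensionality => n.
have := congr1 (fun h => h n.+1) H; rewrite pmulX_coef /= => ->.
by rewrite /p0 /pc; case: (n == 0%N).
Qed.

Fixpoint pinv_seq (f : ps) (n : nat) : seq F :=
  match n with
  | 0 => [:: (f 0%N)^-1]
  | n'.+1 => let s := pinv_seq f n' in
      rcons s (- (f 0%N)^-1 * \sum_(i < n'.+1) f i.+1 * nth 0 s (n' - i))
  end.
Definition pinv (f : ps) : ps := fun n => nth 0 (pinv_seq f n) n.

Lemma size_pinv_seq f n : size (pinv_seq f n) = n.+1.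
Proof. by elim: n => [|n IH] //=; rewrite size_rcons IH. Qed.

Lemma nth_pinv_seq f n m : (m <= n)%N -> nth 0 (pinv_seq f n) m = pinv f m.
Proof.
elim: n => [|n IH] hm.
  by move: hm; rewrite leqn0 => /eqP ->.
case: (ltngtP m n.+1) hm => // [hlt|->] _; last by [].
by rewrite /= nth_rcons size_pinv_seq hlt IH.
Qed.

Lemma pinv0 f : pinv f 0 = (f 0%N)^-1.
Proof. by []. Qed.

Lemma pinvS f n : pinv f n.+1 = - (f 0%N)^-1 * \sum_(i < n.+1) f i.+1 * pinv f (n - i)%N.
Proof.
rewrite /pinv /= nth_rcons size_pinv_seq ltnn eqxx; congr (_ * _).
by apply: eq_bigr => i _; rewrite nth_pinv_seq // leq_subr.
Qed.

Lemma pinvP f : f 0%N != 0 -> pmul f (pinv f) = p1.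
Proof.
move=> hf; apply: functional_extensionality => n; rewrite /pmul /p1 /pc.
case: n => [|n] /=.
  by rewrite big_ord_recl big_ord0 addr0 ?subn0 pinv0 mulfV.
rewrite big_ord_recl subn0 pinvS mulrA mulrN mulfV // mulN1r.
apply/eqP; rewrite addrC subr_eq0; apply/eqP; apply: eq_bigr => i _; by rewrite lift0 subSS.
Qed.

Lemma pinv_unique f g : f 0%N != 0 -> pmul f g = p1 -> g = pinv f.
Proof.
move=> hf H.
have := pinvP _ hf => H2.
transitivity (pmul (pmul f g) (pinv f)); last by rewrite H; ring.
by rewrite (pmulC f g) -pmulA H2; ring.
Qed.

Lemma pinv_inv f : f 0%N != 0 -> pinv (pinv f) = f.
Proof.
move=> hf; symmetry; apply: pinv_unique; first by rewrite pinv0 invr_eq0.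
by rewrite pmulC; exact: pinvP.
Qed.

Lemma cancel_unit g f : g 0%N != 0 -> pmul g f = p0 -> f = p0.
Proof.
move=> hg H.
transitivity (pmul (pmul (pinv g) g) f); first by rewrite (pmulC (pinv g) g) (pinvP _ hg); ring.
by rewrite -pmulA H; ring.
Qed.

Lemma agree_p0_mul n g h : agree n h p0 -> agree n (pmul g h) p0.
Proof.
move=> H; have -> : p0 = pmul g p0 by ring.
apply: pmul_agree => //; by move=> m.
Qed.

Lemma pinv_agree n f f' : f 0%N != 0 -> agree n f f' -> agree n (pinv f) (pinv f').
Proof.
move=> hf H.
have hf' : f' 0%N != 0 by rewrite -H.
have P1 := pinvP _ hf; have P2 := pinvP _ hf'.
have E : psub (pinv f) (pinv f') = pmul (pmul (pinv f) (pinv f')) (psub f' f).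
  transitivity (psub (pmul (pinv f) (pmul f' (pinv f'))) (pmul (pinv f') (pmul f (pinv f)))).
    by rewrite P1 P2; ring.
  ring.
have : agree n (psub (pinv f) (pinv f')) p0.
  rewrite E; apply: agree_p0_mul => m hm.
  by rewrite /psub H // subrr /p0 /pc; case: (m == 0%N).
move=> H2 m hm; have := H2 m hm; rewrite /psub /p0 /pc => /eqP.
by case: (m == 0%N); rewrite subr_eq0 => /eqP.
Qed.

Lemma agree_phiX n r r' k : agree n (phi r) (phi r') -> agree n (phi (r ^+ k)) (phi (r' ^+ k)).
Proof.
move=> H; elim: k => [|k IH]; first by move=> m hm.
rewrite !exprS !phiM; exact: pmul_agree.
Qed.

Lemma coef_pow_low (r : {poly F}) k i : r`_0 = 0 -> (i < k)%N -> (r ^+ k)`_i = 0.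
Proof.
move=> hr; elim: k i => [|k IH] i hi //.
rewrite exprS coefM big1 // => j _.
case: (nat_of_ord j) (ltn_ord j) => [|j'] hj; first by rewrite hr mul0r.
rewrite IH ?mulr0 //.
rewrite ltnS in hj; rewrite ltnS in hi.
have : (i - j'.+1 < i)%N by rewrite ltn_subrL /= (leq_ltn_trans (leq0n j') hj).
move=> h2; apply: leq_trans h2 _; exact: hi.
Qed.

Lemma comp_congr_l n (p p' r : {poly F}) : r`_0 = 0 -> agree n (phi p) (phi p') ->
  agree n (phi (p \Po r)) (phi (p' \Po r)).
Proof.
move=> hr H m hm; rewrite /phi; apply/eqP; rewrite -subr_eq0 -coefB -comp_polyB.
rewrite comp_polyE coef_sum; apply/eqP; apply: big1 => i _.
rewrite coefZ; case: (leqP i n) => hi.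
  by rewrite coefB -/(phi p i) -/(phi p' i) H // subrr mul0r.
rewrite coef_pow_low ?mulr0 //; exact: leq_ltn_trans hm hi.
Qed.

Lemma comp_congr_r n (p r r' : {poly F}) : agree n (phi r) (phi r') ->
  agree n (phi (p \Po r)) (phi (p \Po r')).
Proof.
move=> H m hm; rewrite /phi !comp_polyE !coef_sum; apply: eq_bigr => i _.
rewrite !coefZ; congr (_ * _); exact: (agree_phiX _ _ _ _ H).
Qed.

Variable q : F.
Definition Y : ps := fun n => if n == 0%N then 0 else q.
Definition Yp n := tr Y n.
Definition C (f : ps) : ps := fun n => ((tr f n) \Po (Yp n))`_n.

Lemma Yp0 n : (Yp n)`_0 = 0.
Proof. by rewrite /Yp /tr coef_poly. Qed.

Lemma tr_agree m n f : (m <= n)%N -> agree m (phi (tr f m)) (phi (tr f n)).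
Proof.
move=> hmn k hk; rewrite /phi /tr !coef_poly !ltnS hk.
by rewrite (leq_trans hk hmn).
Qed.

Lemma C_agree n f : agree n (C f) (phi (tr f n \Po Yp n)).
Proof.
move=> m hm; rewrite /C.
have E1 := comp_congr_l m (tr f m) (tr f n) (Yp m) (Yp0 m) (tr_agree m n f hm).
have E2 := comp_congr_r m (tr f n) (Yp m) (Yp n) (tr_agree m n Y hm).
rewrite -/(phi _ m) E1 // E2 //.
Qed.

Lemma tr_ext n f g : agree n f g -> tr f n = tr g n.
Proof.
by move=> H; apply/polyP => i; rewrite /tr !coef_poly; case: ifP => // hi; rewrite H.
Qed.

Lemma C_ext n f g : agree n f g -> agree n (C f) (C g).
Proof.
move=> H; eapply agree_trans; first exact: C_agree.
rewrite (tr_ext n f g H); apply: agree_sym; exact: C_agree.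
Qed.

Lemma C_mul f g : C (pmul f g) = pmul (C f) (C g).
Proof.
apply: agree_eq => n.
eapply agree_trans; first exact: C_agree.
have E : agree n (phi (tr (pmul f g) n)) (phi (tr f n * tr g n)).
  eapply agree_trans; first by apply: agree_sym; apply: agree_tr.
  exact: pmul_poly.
eapply agree_trans; first exact: (comp_congr_l _ _ _ _ (Yp0 n) E).
rewrite comp_polyM phiM; apply: pmul_agree; apply: agree_sym; exact: C_agree.
Qed.

Lemma C_add f g : C (padd f g) = padd (C f) (C g).
Proof.
apply: agree_eq => n.
eapply agree_trans; first exact: C_agree.
have -> : tr (padd f g) n = tr f n + tr g n.
  by apply/polyP => i; rewrite coefD /tr !coef_poly /padd; case: ifP; rewrite ?addr0.
rewrite comp_polyD phiD; apply: padd_agree; apply: agree_sym; exact: C_agree.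
Qed.

Lemma tr_pc n c : tr (pc c) n = c%:P.
Proof. by apply/polyP => i; rewrite /tr coef_poly coefC /pc; case: i => [|i] //=; case: ifP. Qed.

Lemma C_pc c : C (pc c) = pc c.
Proof.
apply: functional_extensionality => n; rewrite /C tr_pc comp_polyC coefC /pc.
by case: (n == 0%N).
Qed.

Lemma C_X : C pX = Y.
Proof.
apply: functional_extensionality => n; rewrite /C.
case: n => [|n].
  have -> : tr pX 0 = 0 by apply/polyP => i; rewrite /tr coef_poly coef0 /pX; case: i.
  by rewrite comp_poly0 coef0.
have -> : tr pX n.+1 = 'X.
  apply/polyP => i; rewrite /tr coef_poly coefX /pX.
  case: (ltnP i n.+2) => hi; first by case: (i == 1%N).
  by case: eqP => // ei; move: hi; rewrite ei.
by rewrite comp_polyX /Yp /tr coef_poly ltnSn.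
Qed.

Lemma C0 f : C f 0%N = f 0%N.
Proof.
rewrite /C.
have -> : tr f 0 = (f 0%N)%:P by apply/polyP => i; rewrite /tr coef_poly coefC; case: i.
by rewrite comp_polyC coefC.
Qed.

Fixpoint ppow (f : ps) (k : nat) : ps := if k is k'.+1 then pmul f (ppow f k') else p1.

Lemma phiXk r k : phi (r ^+ k) = ppow (phi r) k.
Proof. by elim: k => [|k IH] /=; rewrite ?expr0 ?phi1 // exprS phiM IH. Qed.

Lemma ppow_agree n f g k : agree n f g -> agree n (ppow f k) (ppow g k).
Proof. by move=> H; elim: k => [|k IH] //=; apply: pmul_agree. Qed.

Lemma C_formula f n : C f n = \sum_(i < n.+1) f i * ppow Y i n.
Proof.
rewrite /C comp_polyE coef_sum.
under eq_bigr => i _ do rewrite coefZ.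
rewrite (big_ord_widen n.+1 (fun i => (tr f n)`_i * ((Yp n)^+i)`_n) (size_poly _ _)) big_mkcond /=.
apply: eq_bigr => i _.
case: ifP => hi; last first.
  move/negbT: hi; rewrite -leqNgt => hi.
  have : (tr f n)`_i = 0 by rewrite nth_default.
  by rewrite /tr coef_poly ltn_ord => ->; rewrite mul0r.
rewrite /tr coef_poly ltn_ord; congr (_ * _).
rewrite -/(phi _ n) phiXk; apply: ppow_agree; last exact: leqnn.
apply: agree_sym; exact: agree_tr.
Qed.

Definition ee (k : nat) : ps := fun n => q ^+ k * ('C(n, k))%:R.

Lemma omX_coef f n : pmul (psub p1 pX) f n = f n - (if n is m.+1 then f m else 0).
Proof.
have -> : pmul (psub p1 pX) f = psub f (pmul pX f) by ring.
by rewrite /psub pmulX_coef.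
Qed.

Lemma ee0 : pmul (psub p1 pX) (ee 0) = p1.
Proof.
apply: functional_extensionality => n; rewrite omX_coef /ee /p1 /pc.
by case: n => [|n] /=; rewrite !bin0 ?subr0 ?subrr ?expr0 ?mulr1.
Qed.

Lemma eeY : pmul (psub p1 pX) Y = pmul (pc q) pX.
Proof.
apply: functional_extensionality => n; rewrite omX_coef pmulC_coef /Y /pX.
case: n => [|[|n]] /=; by rewrite ?subr0 ?mulr0 ?mulr1 ?subrr.
Qed.

Lemma eeS k : pmul (psub p1 pX) (ee k.+1) = pmul (pc q) (pmul pX (ee k)).
Proof.
apply: functional_extensionality => n; rewrite omX_coef pmulC_coef pmulX_coef /ee.
case: n => [|n]; first by rewrite bin0n mulr0 subr0 mulr0.
by rewrite binS natrD mulrDr addrAC subrr add0r exprS mulrA.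
Qed.

Lemma Ypow k : ppow Y k = pmul (psub p1 pX) (ee k).
Proof.
elim: k => [|k IH] /=; first by rewrite ee0.
rewrite IH eeS; transitivity (pmul (pmul (psub p1 pX) Y) (ee k)); first ring.
by rewrite eeY; ring.
Qed.

Definition SB (B : ps) : ps := fun n => \sum_(i < n.+1) ee i n * B i.

Lemma C_SB B : C B = pmul (psub p1 pX) (SB B).
Proof.
apply: functional_extensionality => n; rewrite C_formula omX_coef /SB.
under eq_bigr => i _ do rewrite Ypow omX_coef.
case: n => [|m] /=.
  by rewrite subr0; apply: eq_bigr => i _; rewrite subr0 mulrC.
have -> : \sum_(i < m.+1) ee i m * B i = \sum_(i < m.+2) ee i m * B i.
  by symmetry; rewrite big_ord_recr /= /ee [X in _ + _ * X%:R * _]bin_small // mulr0 mul0r addr0.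
rewrite -sumrB; apply: eq_bigr => i _.
by rewrite mulrBr mulrC (mulrC (B i)).
Qed.

Definition relR (A B D E : {poly F}) (G : ps) : Prop :=
  padd (padd (pmul (pmul (phi A) G) (C G)) (pmul (phi B) G))
       (padd (pmul (phi D) (C G)) (phi E)) = p0.

Definition LL (a c : F) (K : ps) : ps := padd (pc a) (pmul (pc c) (pmul pX K)).

Lemma C_LL a c K : C (LL a c K) = padd (pc a) (pmul (pc c) (pmul Y (C K))).
Proof. by rewrite /LL C_add !C_mul !C_pc C_X. Qed.

Lemma C_p1 : C p1 = p1.
Proof. exact: C_pc. Qed.

Lemma step_gen (A B D E A' B' D' E' U : {poly F}) (a c lam : F) (G K : ps) :
  relR A B D E G ->
  pmul G (LL a c K) = p1 ->
  lam != 0 -> U`_0 != 0 ->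
  pmul (psub p1 pX) (padd (padd (padd (phi A) (pmul (pc a) (phi B))) (pmul (pc a) (phi D)))
      (pmul (pmul (pc a) (pc a)) (phi E)))
    = pmul pX (pmul (pmul (pc lam) (phi U)) (phi E')) ->
  pmul (pmul (pc c) (pc q)) (padd (phi B) (pmul (pc a) (phi E)))
    = pmul (pmul (pc lam) (phi U)) (phi D') ->
  pmul (pmul (pc c) (psub p1 pX)) (padd (phi D) (pmul (pc a) (phi E)))
    = pmul (pmul (pc lam) (phi U)) (phi B') ->
  pmul (pmul (pmul (pc c) (pc c)) (pc q)) (pmul pX (phi E))
    = pmul (pmul (pc lam) (phi U)) (phi A') ->
  relR A' B' D' E' K.
Proof.
move=> HR HG hlam hU H1 H2 H3 H4.
have HG' : pmul (C G) (padd (pc a) (pmul (pc c) (pmul Y (C K)))) = p1.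
  by rewrite -C_LL -C_mul HG C_p1.
set L := LL a c K in HG.
set L' := padd (pc a) (pmul (pc c) (pmul Y (C K))) in HG'.
set Zexp := padd (phi A) (padd (pmul (phi B) L') (padd (pmul (phi D) L) (pmul (phi E) (pmul L L')))).
have HZ : Zexp = p0.
  move: HR; rewrite /relR => HR.
  transitivity (psub (psub (psub (pmul (pmul L L') (padd (padd (pmul (pmul (phi A) G) (C G)) (pmul (phi B) G))
       (padd (pmul (phi D) (C G)) (phi E))))
     (pmul (phi A) (psub (pmul (pmul G L) (pmul (C G) L')) p1)))
     (pmul (pmul (phi B) L') (psub (pmul G L) p1)))
     (pmul (pmul (phi D) L) (psub (pmul (C G) L') p1))).
    rewrite /Zexp; ring.
  rewrite HR HG HG'; ring.
set R' := padd (padd (pmul (pmul (phi A') K) (C K)) (pmul (phi B') K)) (padd (pmul (phi D') (C K)) (phi E')).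
have hlU : (pmul (pc lam) (phi U)) 0%N != 0.
  by rewrite pmulC_coef mulf_neq0.
apply: (cancel_unit _ _ hlU); apply: pX_cancel.
transitivity (padd (pmul pX (pmul (pmul (pc lam) (phi U)) (phi E')))
   (padd (pmul (pmul pX (pmul (pmul (pc lam) (phi U)) (phi D'))) (C K))
   (padd (pmul (pmul pX (pmul (pmul (pc lam) (phi U)) (phi B'))) K)
    (pmul (pmul (pmul pX (pmul (pmul (pc lam) (phi U)) (phi A'))) K) (C K))))).
  rewrite /R'; ring.
rewrite -H1 -H2 -H3 -H4.
set T1 := pmul (pmul (pc c) (padd (padd (phi B) (pmul (pc a) (phi E))) (pmul (pmul (pc c) (phi E)) (pmul pX K)))) (C K).
set Z0 := padd (padd (padd (padd (phi A) (pmul (pc a) (phi B))) (pmul (pc a) (phi D)))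
      (pmul (pmul (pc a) (pc a)) (phi E))) (pmul (pmul (pc c) pX) (pmul (padd (phi D) (pmul (pc a) (phi E))) K)).
transitivity (padd (pmul (psub p1 pX) Z0) (pmul (pmul (pc q) pX) T1)).
  rewrite /Z0 /T1; ring.
rewrite -eeY.
transitivity (pmul (psub p1 pX) Zexp); last by rewrite HZ; ring.
rewrite /Z0 /T1 /Zexp /L /L' /LL; ring.
Qed.
End PS.

Section P.
Variable F : fieldType.
Variable q : F.
Definition Ae (K : F) : {poly F} := (-(q * K^+3))%:P * 'X * ((q - 1)%:P + 'X).
Definition Be (K : F) : {poly F} := -((1 - 'X) * (1 - K%:P * 'X)).
Definition De (K Qk : F) : {poly F} := q%:P * ((Qk%:P + K%:P * 'X)^+2 - K%:P * 'X).
Definition Ee : {poly F} := -((1 - 'X) * ((q - 1)%:P + 'X)).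
Definition Ao (M Q : F) : {poly F} := (M*Q)%:P * 'X * ((q - 1)%:P + 'X).
Definition Bo (M Q : F) : {poly F} := -(1 + (M*(Q-2))%:P * 'X + (M^+2)%:P * 'X * 'X).
Definition Do (M Q : F) : {poly F} := Q%:P * (Q%:P + M%:P * 'X).
Definition Eo (M : F) : {poly F} := -((M^+2)%:P * ((q - 1)%:P + 'X)).

Ltac polysolve := apply/polyP; let i := fresh "i" in intro i;
  rewrite !(mulrDl, mulrDr, mulrBl, mulrBr, mulNr, mulrN, expr2, mul1r, mulr1, opprB, opprD, opprK) !mulrA !coefE;
  case: i => [|[|[|[|[|i]]]]] /=.

Lemma eH2 (Qk : F) : q - 1 != 0 ->
  let K := (Qk - 1) / (q - 1) in let M := (q * Qk - 1) / (q - 1) in let a := (q * Qk ^+ 2 - 1) / (q - 1) in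
  let c := Qk * M in let lam := - (Qk * M) in
  c%:P * q%:P * (Be K + a%:P * Ee) = lam%:P * (1 - 'X) * Do M (q * Qk).
Proof.
move=> ht K M a c lam; rewrite /Be /Ee /Do /a /c /lam /K /M.
polysolve.
all: (field; rewrite ?ht //).
Qed.

Lemma eH1 (Qk : F) : q - 1 != 0 ->
  let K := (Qk - 1) / (q - 1) in let M := (q * Qk - 1) / (q - 1) in let a := (q * Qk ^+ 2 - 1) / (q - 1) in
  let c := Qk * M in let lam := - (Qk * M) in
  (1 - 'X) * (Ae K + a%:P * Be K + a%:P * De K Qk + a%:P * a%:P * Ee) = 'X * (lam%:P * (1 - 'X) * Eo M).
Proof.
move=> ht K M a c lam; rewrite /Ae /Be /De /Ee /Eo /a /c /lam /K /M.
polysolve.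
all: (field; rewrite ?ht //).
Qed.

Lemma eH3 (Qk : F) : q - 1 != 0 ->
  let K := (Qk - 1) / (q - 1) in let M := (q * Qk - 1) / (q - 1) in let a := (q * Qk ^+ 2 - 1) / (q - 1) in
  let c := Qk * M in let lam := - (Qk * M) in
  c%:P * (1 - 'X) * (De K Qk + a%:P * Ee) = lam%:P * (1 - 'X) * Bo M (q * Qk).
Proof.
move=> ht K M a c lam; rewrite /Bo /De /Ee /a /c /lam /K /M.
polysolve.
all: (field; rewrite ?ht //).
Qed.

Lemma eH4 (Qk : F) : q - 1 != 0 ->
  let K := (Qk - 1) / (q - 1) in let M := (q * Qk - 1) / (q - 1) in
  let c := Qk * M in let lam := - (Qk * M) in
  c%:P * c%:P * q%:P * ('X * Ee) = lam%:P * (1 - 'X) * Ao M (q * Qk).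
Proof.
move=> ht K M c lam; rewrite /Ao /Ee /c /lam /K /M.
polysolve.
all: (field; rewrite ?ht //).
Qed.

Lemma oH1 (Qk : F) : q - 1 != 0 -> q * Qk - 1 != 0 ->
  let M := (q * Qk - 1) / (q - 1) in let a := (q * Qk + 1) / M in
  (1 - 'X) * (Ao M (q * Qk) + a%:P * Bo M (q * Qk) + a%:P * Do M (q * Qk) + a%:P * a%:P * Eo M)
   = 'X * (M%:P * 1 * Ee).
Proof.
move=> ht hM M a; rewrite /Ao /Bo /Do /Eo /Ee /a /M.
polysolve.
all: (field; rewrite ?ht ?hM //).
Qed.

Lemma oH2 (Qk : F) : q - 1 != 0 -> q * Qk - 1 != 0 ->
  let M := (q * Qk - 1) / (q - 1) in let a := (q * Qk + 1) / M in
  (- M)%:P * q%:P * (Bo M (q * Qk) + a%:P * Eo M) = M%:P * 1 * De M (q * Qk).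
Proof.
move=> ht hM M a; rewrite /Bo /Eo /De /a /M.
polysolve.
all: (field; rewrite ?ht ?hM //).
Qed.

Lemma oH3 (Qk : F) : q - 1 != 0 -> q * Qk - 1 != 0 ->
  let M := (q * Qk - 1) / (q - 1) in let a := (q * Qk + 1) / M in
  (- M)%:P * (1 - 'X) * (Do M (q * Qk) + a%:P * Eo M) = M%:P * 1 * Be M.
Proof.
move=> ht hM M a; rewrite /Do /Eo /Be /a /M.
polysolve.
all: (field; rewrite ?ht ?hM //).
Qed.

Lemma oH4 (Qk : F) : q - 1 != 0 -> q * Qk - 1 != 0 ->
  let M := (q * Qk - 1) / (q - 1) in
  (- M)%:P * (- M)%:P * q%:P * ('X * Eo M) = M%:P * 1 * Ae M.
Proof.
move=> ht hM M; rewrite /Eo /Ae /M.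
polysolve.
all: (field; rewrite ?ht ?hM //).
Qed.
End P.

Section MainS.
Variable F : fieldType.
Variable q : F.
Hypothesis hq0 : q != 0.
Hypothesis hqn : forall n, (0 < n)%N -> q ^+ n != 1.

Add Ring psRing2 : (ps_ring F).

Lemma ht : q - 1 != 0.
Proof. by rewrite subr_eq0; have := hqn 1 isT; rewrite expr1. Qed.

Lemma hqn' n : (0 < n)%N -> q ^+ n - 1 != 0.
Proof. by move=> hn; rewrite subr_eq0 hqn. Qed.

Definition qi k : F := (q ^+ k - 1) / (q - 1).
Definition aa (j : nat) : F := if odd j then (q ^+ (j./2).+1 + 1) / qi (j./2).+1 else qi j.+1.
Definition cc (j : nat) : F := if odd j then q ^+ (j./2) * qi (j./2).+1 else - qi (j./2).

Definition relE k (G : ps F) := relR F q (Ae _ q (qi k)) (Be _ (qi k)) (De _ q (qi k) (q ^+ k)) (Ee _ q) G.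
Definition relO k (G : ps F) := relR F q (Ao _ q (qi k.+1) (q ^+ k.+1)) (Bo _ (qi k.+1) (q ^+ k.+1))
   (Do _ (qi k.+1) (q ^+ k.+1)) (Eo _ q (qi k.+1)) G.

Lemma rel_const (A B D E : {poly F}) G : relR F q A B D E G -> A`_0 = 0 ->
  G 0%N * (B`_0 + D`_0) + E`_0 = 0.
Proof.
move=> H hA; have Hc0 := congr1 (fun h => h 0%N) H; move: Hc0.
rewrite /padd /pmul /p0 /pc /= !big_ord1 /= ?big_ord1 /= !C0 /phi hA subnn => Hc0.
by rewrite -[RHS]Hc0; mcring.
Qed.


Ltac coefexp := rewrite !(mulrDl, mulrDr, mulrBl, mulrBr, mulNr, mulrN, expr2, mul1r, mulr1, opprB, opprD, opprK) ?mulrA !coefE /=.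

Lemma Ae_0 (K : F) : (Ae _ q K)`_0 = 0.
Proof. rewrite /Ae; coefexp; mcring. Qed.
Lemma Be_0 (K : F) : (Be _ K)`_0 = -1.
Proof. rewrite /Be; coefexp; mcring. Qed.
Lemma De_0 (K Qk : F) : (De _ q K Qk)`_0 = q * Qk ^+ 2.
Proof. rewrite /De; coefexp; mcring. Qed.
Lemma Ee_0 : (Ee _ q)`_0 = - (q - 1).
Proof. rewrite /Ee; coefexp; mcring. Qed.
Lemma Ao_0 (M Q : F) : (Ao _ q M Q)`_0 = 0.
Proof. rewrite /Ao; coefexp; mcring. Qed.
Lemma Bo_0 (M Q : F) : (Bo _ M Q)`_0 = -1.
Proof. rewrite /Bo; coefexp; mcring. Qed.
Lemma Do_0 (M Q : F) : (Do _ M Q)`_0 = Q ^+ 2.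
Proof. rewrite /Do; coefexp; mcring. Qed.
Lemma Eo_0 (M : F) : (Eo _ q M)`_0 = - (M ^+ 2 * (q - 1)).
Proof. rewrite /Eo; coefexp; mcring. Qed.

Lemma nzQ k : q ^+ k != 0.
Proof. exact: expf_neq0. Qed.
Lemma nz2 k : q * (q ^+ k) ^+ 2 - 1 != 0.
Proof. by rewrite -exprM -exprS hqn'. Qed.
Lemma nz3 k : (q ^+ k.+1) ^+ 2 - 1 != 0.
Proof. by rewrite -exprM hqn' // muln2. Qed.
Lemma nz1 k : q * q ^+ k - 1 != 0.
Proof. by rewrite -exprS hqn'. Qed.
Lemma nz4 k : q * q ^+ k + 1 != 0.
Proof.
have E : (q * q ^+ k) ^+ 2 - 1 = (q * q ^+ k - 1) * (q * q ^+ k + 1) by mcring.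
apply/negP => /eqP H; have := nz3 k; by rewrite [q ^+ k.+1]exprS E H mulr0 eqxx.
Qed.

Lemma relE_const k G : relE k G -> G 0%N * aa (k.*2) = 1.
Proof.
move=> H; have := rel_const _ _ _ _ _ H (Ae_0 _).
rewrite Be_0 De_0 Ee_0 /aa odd_double /qi [q ^+ (k.*2).+1]exprS -muln2 exprM => H2.
have E : G 0%N * (q * (q ^+ k) ^+ 2 - 1) = q - 1.
  by apply/eqP; rewrite -subr_eq0; apply/eqP; rewrite -H2; mcring.
by rewrite mulrA E divff // ht.
Qed.

Lemma relO_const k G : relO k G -> G 0%N * aa (k.*2).+1 = 1.
Proof.
move=> H; have := rel_const _ _ _ _ _ H (Ao_0 _ _).
rewrite Bo_0 Do_0 Eo_0 /aa /= odd_double /= uphalf_double /qi => H2.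
have E : G 0%N = ((q ^+ k.+1 - 1) / (q - 1)) ^+ 2 * (q - 1) / ((q ^+ k.+1) ^+ 2 - 1).
  apply: (mulIf (nz3 k)); rewrite divfK ?nz3 //.
  by apply/eqP; rewrite -subr_eq0; apply/eqP; rewrite -H2; mcring.
have h4 : q ^+ k.+1 + 1 != 0 by rewrite exprS nz4.
have h1 : q ^+ k.+1 - 1 != 0 by rewrite hqn'.
have h3 := nz3 k; have h0 := ht.
rewrite E; move: (q ^+ k.+1) h4 h1 h3 => Q h4 h1 h3.
field; rewrite ?h0 ?h1 ?h3 ?h4 //.
Qed.

Lemma step_poly (A B D E A' B' D' E' U : {poly F}) (a c lam : F) (G K : ps F) :
  relR F q A B D E G ->
  pmul _ G (LL _ a c K) = p1 _ ->
  lam != 0 -> U`_0 != 0 ->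
  (1 - 'X) * (A + a%:P * B + a%:P * D + a%:P * a%:P * E) = 'X * (lam%:P * U * E') ->
  c%:P * q%:P * (B + a%:P * E) = lam%:P * U * D' ->
  c%:P * (1 - 'X) * (D + a%:P * E) = lam%:P * U * B' ->
  c%:P * c%:P * q%:P * ('X * E) = lam%:P * U * A' ->
  relR F q A' B' D' E' K.
Proof.
move=> HR HG hl hU P1 P2 P3 P4.
apply: (step_gen _ _ A B D E A' B' D' E' U a c lam G K HR HG hl hU).
- by have := congr1 (phi _) P1; rewrite !(phiM, phiD, phiN, phi1, phiX, phiC) => h; exact h.
- by have := congr1 (phi _) P2; rewrite !(phiM, phiD, phiN, phi1, phiX, phiC) => h; exact h.
- by have := congr1 (phi _) P3; rewrite !(phiM, phiD, phiN, phi1, phiX, phiC) => h; exact h.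
- by have := congr1 (phi _) P4; rewrite !(phiM, phiD, phiN, phi1, phiX, phiC) => h; exact h.
Qed.

Lemma LL_pinv (G : ps F) (a c : F) : pinv _ G 0%N = a -> c != 0 ->
  LL _ a c (fun n => pinv _ G n.+1 / c) = pinv _ G.
Proof.
move=> h0 hc; apply: functional_extensionality => n.
rewrite /LL /padd pmulC_coef pmulX_coef /pc.
by case: n => [|n] /=; rewrite ?mulr0 ?addr0 ?add0r // mulrC divfK.
Qed.

Lemma G_step (G : ps F) (a c : F) : G 0%N * a = 1 -> c != 0 ->
  pmul _ G (LL _ a c (fun n => pinv _ G n.+1 / c)) = p1 _.
Proof.
move=> h hc.
have hG : G 0%N != 0 by apply/negP => /eqP h0; move: h; rewrite h0 mul0r => /eqP; rewrite eq_sym oner_eq0.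
rewrite LL_pinv //; first exact: pinvP.
by rewrite pinv0 -[RHS](mulKf hG a) h mulr1.
Qed.

Lemma even_to_odd k G : relE k G -> relO k (fun n => pinv _ G n.+1 / cc (k.*2).+1).
Proof.
move=> H; have H0 := relE_const k G H.
have hc : cc (k.*2).+1 != 0.
  rewrite /cc /= odd_double /= uphalf_double /qi mulf_neq0 ?nzQ // mulf_neq0 ?invr_eq0 ?ht //.
  by rewrite hqn'.
have HG := G_step G _ _ H0 hc.
move: HG H0 hc H; rewrite /relO /relE /aa /cc /= odd_double /= uphalf_double /qi.
rewrite [q ^+ (k.*2).+1]exprS -muln2 exprM [q ^+ k.+1]exprS.
set Qk := q ^+ k => HG H0 hc H.
have hQ : Qk != 0 by exact: nzQ.
have h1 : q * Qk - 1 != 0 by exact: nz1.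
apply: (step_poly _ _ _ _ _ _ _ _ (1 - 'X) _ _ (- (Qk * ((q * Qk - 1) / (q - 1)))) _ _ H HG).
- by rewrite oppr_eq0 mulf_neq0 // mulf_neq0 // invr_eq0 ht.
- by rewrite coefB coef1 coefX subr0 oner_eq0.
- exact: (eH1 _ q Qk ht).
- exact: (eH2 _ q Qk ht).
- exact: (eH3 _ q Qk ht).
- exact: (eH4 _ q Qk ht).
Qed.

Lemma half_SS k : ((k.*2).+2)./2 = k.+1.
Proof. by rewrite -doubleS doubleK. Qed.

Lemma odd_to_even k G : relO k G -> relE k.+1 (fun n => pinv _ G n.+1 / cc (k.*2).+2).
Proof.
move=> H; have H0 := relO_const k G H.
have hM : qi k.+1 != 0 by rewrite /qi mulf_neq0 ?invr_eq0 ?ht ?hqn'.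
have hc : cc (k.*2).+2 != 0.
  by rewrite /cc -doubleS odd_double doubleK oppr_eq0.
have HG := G_step G _ _ H0 hc.
move: HG H0 hc H hM; rewrite /relO /relE /aa /cc -doubleS odd_double doubleK /=.
rewrite odd_double /= uphalf_double /qi [q ^+ k.+1]exprS.
set Qk := q ^+ k => HG H0 hc H hM.
have h1 : q * Qk - 1 != 0 by exact: nz1.
apply: (step_poly _ _ _ _ _ _ _ _ 1 _ _ ((q * Qk - 1) / (q - 1)) _ _ H HG).
- exact: hM.
- by rewrite coef1 oner_eq0.
- exact: (oH1 _ q Qk ht h1).
- exact: (oH2 _ q Qk ht h1).
- exact: (oH3 _ q Qk ht h1).
- exact: (oH4 _ q Qk ht h1).
Qed.

Definition isBC (beta : nat -> F) : Prop :=
  forall n : nat,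
    q * (\sum_(k < n.+1) ('C(n, k))%:R * q ^+ k * beta k) - beta n
    = if n == 0%N then q - 1 else if n == 1%N then 1 else 0.

Lemma R0 (B : ps F) : isBC B -> relE 0 B.
Proof.
move=> hB.
have HS : psub _ (pmul _ (pc _ q) (SB _ q B)) B = padd _ (pc _ (q - 1)) (pX _).
  apply: functional_extensionality => n; rewrite /psub pmulC_coef /SB.
  under eq_bigr => i _ do rewrite /ee (mulrC (q ^+ i)).
  rewrite hB; rewrite /padd /pc /pX.
  by case: n => [|[|n]] //=; rewrite ?addr0 ?add0r.
have HC := C_SB _ q B.
have qi0 : qi 0 = 0 by rewrite /qi expr0 subrr mul0r.
rewrite /relE /relR qi0 /Ae /Be /De expr0.
rewrite !(expr0n, mulr0, oppr0, polyC0, mul0r, addr0, subr0, mulr1, polyC1, expr1n).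
rewrite /Ee !(phiM, phiD, phiN, phi1, phiX, phiC) HC.
rewrite -/(p0 F).
transitivity (pmul _ (psub _ (p1 _) (pX _)) (psub _ (psub _ (pmul _ (pc _ q) (SB _ q B)) B) (padd _ (pc _ (q - 1)) (pX _)))).
  ring.
rewrite HS; ring.
Qed.

Fixpoint Gs (B : ps F) (j : nat) : ps F :=
  if j is j'.+1 then (fun n => pinv _ (Gs B j') n.+1 / cc j'.+1) else B.

Lemma Gs_rel B : isBC B -> forall k, relE k (Gs B k.*2) /\ relO k (Gs B (k.*2).+1).
Proof.
move=> hB; elim => [|k [_ HO]].
  have H := R0 B hB; split; [exact: H | exact: (even_to_odd 0 _ H)].
have HE := odd_to_even k _ HO.
rewrite doubleS; split; [exact: HE | exact: (even_to_odd k.+1 _ HE)].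
Qed.

Lemma cc_nz j : cc j.+1 != 0.
Proof.
have := odd_double_half j; case: (odd j) => /= Ej; rewrite -Ej.
  rewrite add1n /cc -doubleS odd_double doubleK oppr_eq0.
  by rewrite /qi mulf_neq0 ?invr_eq0 ?ht ?hqn'.
rewrite add0n /cc /= odd_double /= uphalf_double.
by rewrite mulf_neq0 ?nzQ // /qi mulf_neq0 ?invr_eq0 ?ht ?hqn'.
Qed.

Lemma Gs_const B j : isBC B -> Gs B j 0%N * aa j = 1.
Proof.
move=> hB; have := odd_double_half j; case: (odd j) => /= Ej; rewrite -Ej.
  by rewrite add1n; apply: relO_const; case: (Gs_rel B hB j./2).
by rewrite add0n; apply: relE_const; case: (Gs_rel B hB j./2).
Qed.

Lemma Gs_nz B j : isBC B -> Gs B j 0%N != 0.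
Proof.
move=> hB; apply/negP => /eqP h; have := Gs_const B j hB.
by rewrite h mul0r => /eqP; rewrite eq_sym oner_eq0.
Qed.

Lemma pinv_Gs B j : isBC B -> pinv _ (Gs B j) = LL _ (aa j) (cc j.+1) (Gs B j.+1).
Proof.
move=> hB; rewrite /= LL_pinv //; last exact: cc_nz.
by rewrite pinv0 -[RHS](mulKf (Gs_nz B j hB) (aa j)) Gs_const // mulr1.
Qed.

Lemma pinv_Gs0 B j : isBC B -> pinv _ (Gs B j) 0%N != 0.
Proof. by move=> hB; rewrite pinv0 invr_eq0 Gs_nz. Qed.

Fixpoint ctail (j d : nat) : ps F :=
  if d is d'.+1 then padd _ (pc _ (aa j)) (pmul _ (pc _ (cc j.+1)) (pmul _ (pX _) (pinv _ (ctail j.+1 d'))))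
  else pc _ (aa j).

Lemma agree_X n (f g : ps F) : agree _ n f g -> agree _ n.+1 (pmul _ (pX _) f) (pmul _ (pX _) g).
Proof. by move=> H [|m] hm; rewrite !pmulX_coef // H. Qed.

Lemma agree_refl n (f : ps F) : agree _ n f f.
Proof. by []. Qed.

Lemma ctail_agree B : isBC B -> forall d j, agree _ d (ctail j d) (pinv _ (Gs B j)).
Proof.
move=> hB; elim => [|d IH] j.
  move=> m; rewrite leqn0 => /eqP -> /=.
  by rewrite (pinv_Gs B j hB) /LL /padd pmulC_coef pmulX_coef /pc /= mulr0 addr0.
rewrite (pinv_Gs B j hB) /LL /=.
apply: padd_agree; first exact: agree_refl.
apply: pmul_agree; first exact: agree_refl.
apply: agree_X.
have := pinv_agree _ d _ _ (pinv_Gs0 B j.+1 hB) (agree_sym _ _ _ _ (IH j.+1)).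
by rewrite pinv_inv ?Gs_nz // => h; apply: agree_sym.
Qed.

Theorem gen_main B : isBC B -> forall N m, (N <= m)%N -> forall n, (n <= N)%N ->
  pinv _ (ctail 0 m) n = B n.
Proof.
move=> hB N m hNm n hn.
have := pinv_agree _ m _ _ (pinv_Gs0 B 0 hB) (agree_sym _ _ _ _ (ctail_agree B hB m 0)).
rewrite pinv_inv ?(Gs_nz B 0 hB) // => h.
by rewrite -h //; apply: leq_trans hn hNm.
Qed.
End MainS.


Lemma inv_seq_eq (f : fps) n : fps_inv_seq f n = pinv_seq Kq f n.
Proof. by elim: n => //= n ->. Qed.

Lemma inv_eq (f : fps) : fps_inv f = pinv Kq f.
Proof. by apply: functional_extensionality => n; rewrite /fps_inv /pinv inv_seq_eq. Qed.

Lemma scale_eq c (f : fps) : fps_scale c f = pmul Kq (pc Kq c) f.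
Proof. by apply: functional_extensionality => n; rewrite pmulC_coef. Qed.

Lemma mulX_eq (f : fps) : fps_mulX f = pmul Kq (pX Kq) f.
Proof. by apply: functional_extensionality => n; rewrite pmulX_coef. Qed.

Lemma tail_eq j d : cf_tail cfB_a cfB_c j d = ctail Kq qq j d.
Proof.
elim: d j => [|d IH] j //=.
by rewrite IH inv_eq mulX_eq scale_eq.
Qed.

Lemma qq_neq0 : qq != 0.
Proof.
rewrite /qq -(@tofrac0 _) tofrac_eq.
by rewrite polyX_eq0.
Qed.

Lemma qq_pow n : (0 < n)%N -> qq ^+ n != 1.
Proof.
move=> hn; rewrite /qq -tofracXn -(@tofrac1 _) tofrac_eq.
apply/negP => /eqP h; have := congr1 (fun p : {poly rat} => p`_0) h.
by rewrite /= coefXn coef1; move: hn; clear h; case: n.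
Qed.

Theorem mainTheorem8 (beta : nat -> Kq) :
  is_qBernoulliCarlitz beta ->
  forall N : nat, exists M : nat, forall m : nat, (M <= m)%N ->
    forall n : nat, (n <= N)%N -> cf_convergent cfB_a cfB_c m n = beta n.
Proof.
move=> hB N; exists N => m hm n hn.
rewrite /cf_convergent tail_eq inv_eq.
exact: (gen_main Kq qq qq_neq0 qq_pow beta hB N m hm n hn).
Qed.
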